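(* For $0\le v\le 1$ and $a,b>0$, $$L(a,b)\le A\left(L_v(a,b),L_{1-v}(a,b)\right)\le A(a,b)$$ and $$L(a,b)\le L\left(A_v(a,b),A_{1-v}(a,b)\right)\le A(a,b).$$
   Context: For $x,y>0$: $A(x,y):=\frac{x+y}{2}$, $A_v(x,y):=(1-v)x+vy$, and the logarithmic mean $L(x,y):=\frac{x-y}{\log x-\log y}$ for $x\neq y$, $L(x,x):=x$. For $0<v<1$ and $a\ne b$ the weighted logarithmic mean is $$L_v(a,b):=\frac{1}{\log a-\log b}\left(\frac{1-v}{v}(a-a^{1-v}b^v)+\frac{v}{1-v}(a^{1-v}b^v-b)\right),$$ with $L_v(a,a):=a$, and for the endpoint values (by continuity in $v$) $L_0(a,b):=a$, $L_1(a,b):=b$. Note $L_{1/2}(a,b)=L(a,b)$. *)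

(* Defs.v *)
From Stdlib Require Import Reals.
Open Scope R_scope.

Definition Amean (x y : R) : R := (x + y) / 2.

Definition Aw (v x y : R) : R := (1 - v) * x + v * y.

Definition Lmean (x y : R) : R :=
  if Req_EM_T x y then x else (x - y) / (ln x - ln y).

(* Weighted logarithmic mean L_v(a,b), 0 <= v <= 1, with
   L_v(a,a) = a, L_0(a,b) = a, L_1(a,b) = b (continuous extension). *)
Definition Lw (v a b : R) : R :=
  if Req_EM_T a b then a
  else if Req_EM_T v 0 then a
  else if Req_EM_T v 1 then b
  else (1 / (ln a - ln b)) *
       ((1 - v) / v * (a - Rpower a (1 - v) * Rpower b v)
        + v / (1 - v) * (Rpower a (1 - v) * Rpower b v - b)).

(* Main.v *)
Require Import Defs.
From Coquelicot Require Import Coquelicot.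
From Stdlib Require Import Reals Lra Psatz.
Open Scope R_scope.

Lemma mono_int (f df : R -> R) (a b : R) :
  (forall x, a < x < b -> is_derive f x (df x)) ->
  (forall x, a < x < b -> 0 <= df x) ->
  forall x y, a < x -> x <= y -> y < b -> f x <= f y.
Proof.
intros Hd Hp x y Hx Hxy Hy.
destruct (MVT_gen f x y df) as [c [Hc E]].
- intros z Hz. apply Hd. unfold Rmin, Rmax in Hz. destruct (Rle_dec x y); lra.
- intros z Hz. assert (Hz' : is_derive f z (df z)).
  { apply Hd. unfold Rmin, Rmax in Hz. destruct (Rle_dec x y); lra. }
  apply is_derive_Reals in Hz'.
  exact (derivable_continuous_pt f z (exist _ (df z) Hz')).
- assert (0 <= df c). { apply Hp. unfold Rmin, Rmax in Hc. destruct (Rle_dec x y); lra. }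
  nra.
Qed.

Lemma mono_all (f df : R -> R) :
  (forall x, is_derive f x (df x)) ->
  (forall x, 0 <= df x) ->
  forall x y, x <= y -> f x <= f y.
Proof.
intros Hd Hp x y Hxy.
apply (mono_int f df (x-1) (y+1)); auto; lra.
Qed.

(* K: L <= A in exp form *)
Lemma K0 (t : R) : 0 <= t * (t * (exp t + 1) - 2 * (exp t - 1)).
Proof.
set (h := fun t => t * (exp t + 1) - 2 * (exp t - 1)).
assert (Hm : forall x y, x <= y -> h x <= h y).
{ apply (mono_all h (fun t => 1 - exp t + t * exp t)).
  - intros x. unfold h. auto_derive; auto. ring.
  - intros x. pose proof (exp_ineq1_le (-x)). pose proof (exp_pos x).
    assert (exp (-x) * exp x = 1) by (rewrite <- exp_plus; replace (-x+x) with 0 by ring; apply exp_0).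
    nra. }
assert (h 0 = 0) by (unfold h; rewrite exp_0; ring).
destruct (Rle_dec 0 t).
- pose proof (Hm 0 t r). fold (h t). nra.
- pose proof (Hm t 0 ltac:(lra)). fold (h t). nra.
Qed.

Lemma KL (s t : R) : s <> t -> (exp s - exp t) / (s - t) <= (exp s + exp t) / 2.
Proof.
intros H. pose proof (K0 (s - t)).
pose proof (exp_pos t).
assert (s - t <> 0) by lra.
assert (Es : exp s = exp (s - t) * exp t) by (rewrite <- exp_plus; f_equal; ring).
rewrite Es.
set (d := s - t) in *. set (E := exp t) in *. set (q := exp d) in *.
assert (Hd2 : 0 < d * d) by nra.
apply Rmult_le_reg_r with (d * d * 2 / E).
{ apply Rdiv_lt_0_compat; lra. }
replace ((q * E - E) / d * (d * d * 2 / E)) with (2 * d * (q - 1)) by (field; lra).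
replace ((q * E + E) / 2 * (d * d * 2 / E)) with (d * d * (q+1)) by (field; lra).
nra.
Qed.

Lemma exp_le_exp' (x y : R) : x <= y -> exp x <= exp y.
Proof. intros H. destruct (Req_dec x y). subst; lra. left; apply exp_increasing; lra. Qed.

Lemma expinv (x : R) : exp (- x) = / exp x.
Proof. apply exp_Ropp. Qed.

Lemma coshmono (w s : R) : -1 <= w <= 1 ->
  exp (w * s) + exp (- (w * s)) <= exp s + exp (- s).
Proof.
intros Hw.
assert (G : forall u, 0 <= u -> exp (w * u) + exp (- (w * u)) <= exp u + exp (- u)).
{ intros u Hu.
  assert (H1 : exp (w*u) <= exp u) by (apply exp_le_exp'; nra).
  assert (H2 : exp (-u) <= exp (w*u)) by (apply exp_le_exp'; nra).
  rewrite !expinv in *. 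
  pose proof (exp_pos u). pose proof (exp_pos (w*u)).
  set (A := exp u) in *. set (B := exp (w*u)) in *.
  assert (1 <= A * B).
  { apply Rmult_le_reg_r with (/A). apply Rinv_0_lt_compat; lra.
    replace (A * B * / A) with B by (field; lra). lra. }
  assert (A + / A - (B + / B) = (A - B) * (A * B - 1) / (A * B)) by (field; lra).
  assert (0 <= (A - B) * (A * B - 1) / (A * B)).
  { apply Rdiv_le_0_compat; nra. }
  lra. }
destruct (Rle_dec 0 s).
- apply G; auto.
- pose proof (G (-s) ltac:(lra)). replace (w * - s) with (- (w*s)) in H by ring.
  replace (- - (w * s)) with (w * s) in H by ring. replace (- - s) with s in H by ring. lra.
Qed.

Lemma F1 (w s : R) : -1 <= w <= 1 ->
  0 <= w * s * (w * (exp s - exp (- s)) - (exp (w * s) - exp (- (w * s)))).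
Proof.
intros Hw.
assert (G : forall w, 0 <= w <= 1 -> forall s,
  0 <= s * (w * (exp s - exp (- s)) - (exp (w * s) - exp (- (w * s))))).
{ intros u Hu t.
  set (h := fun s => u * (exp s - exp (- s)) - (exp (u * s) - exp (- (u * s)))).
  assert (Hm : forall x y, x <= y -> h x <= h y).
  { apply (mono_all h (fun s => u * ((exp s + exp (-s)) - (exp (u*s) + exp (-(u*s)))))).
    - intros x. unfold h. auto_derive; auto. ring.
    - intros x. pose proof (coshmono u x ltac:(lra)). nra. }
  assert (h 0 = 0) by (unfold h; rewrite Rmult_0_r, Ropp_0, exp_0; ring).
  destruct (Rle_dec 0 t).
  - pose proof (Hm 0 t r). fold (h t). nra.
  - pose proof (Hm t 0 ltac:(lra)). fold (h t). nra. }
destruct (Rle_dec 0 w).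
- pose proof (G w ltac:(lra) s). nra.
- pose proof (G (-w) ltac:(lra) s).
  replace (- w * s) with (- (w * s)) in H by ring. rewrite Ropp_involutive in H. nra.
Qed.

Lemma lz_bounds (l z : R) : 0 <= l <= 1 -> -1 < z < 1 -> 0 < 1 + l * z /\ 0 < 1 - l * z.
Proof. intros Hl Hz. split; destruct (Rle_dec 0 z); nra. Qed.

Lemma Fconv (l x : R) : 0 <= l <= 1 -> 0 <= x < 1 ->
  ln (1 + l * x) - ln (1 - l * x) <= l * (ln (1 + x) - ln (1 - x)).
Proof.
intros Hl Hx.
set (h := fun x => l * (ln (1 + x) - ln (1 - x)) - (ln (1 + l * x) - ln (1 - l * x))).
assert (Hm : forall x y, -1 < x -> x <= y -> y < 1 -> h x <= h y).
{ apply (mono_int h (fun x => l * (/ (1 + x) + / (1 - x)) - l * (/ (1 + l * x) + / (1 - l * x))) (-1) 1).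
  - intros z Hz. destruct (lz_bounds l z Hl Hz). unfold h. auto_derive.
    + repeat split; lra.
    + field. repeat split; lra.
  - intros z Hz. destruct (lz_bounds l z Hl Hz).
    assert (E : l * (/ (1 + z) + / (1 - z)) - l * (/ (1 + l * z) + / (1 - l * z))
       = 2 * l * (z * z) * (1 - l * l) / (((1 + z) * (1 - z)) * ((1 + l * z) * (1 - l * z)))).
    { field. repeat split; lra. }
    rewrite E. apply Rdiv_le_0_compat.
    + assert (0 <= z * z) by nra. assert (0 <= 1 - l*l) by nra.
      apply Rmult_le_pos; [apply Rmult_le_pos|]; nra.
    + apply Rmult_lt_0_compat; apply Rmult_lt_0_compat; lra. }
assert (h 0 = 0).
{ unfold h. rewrite Rmult_0_r, !Rplus_0_r, !Rminus_0_r, ln_1. ring. }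
pose proof (Hm 0 x ltac:(lra) ltac:(lra) ltac:(lra)). unfold h in *. lra.
Qed.


Lemma ln_neq (x y : R) : 0 < x -> 0 < y -> x <> y -> ln x <> ln y.
Proof. intros Hx Hy H E. apply H. apply ln_inv; auto. Qed.

Lemma Lmean_ne (x y : R) : x <> y -> Lmean x y = (x - y) / (ln x - ln y).
Proof. intros H. unfold Lmean. destruct (Req_EM_T x y); [contradiction|reflexivity]. Qed.

Lemma Lmean_sym (x y : R) : 0 < x -> 0 < y -> Lmean x y = Lmean y x.
Proof.
intros Hx Hy. destruct (Req_dec x y) as [E|E].
- subst; reflexivity.
- rewrite !Lmean_ne; auto. pose proof (ln_neq x y Hx Hy E).
  field. split; lra.
Qed.

Lemma LA (x y : R) : 0 < x -> 0 < y -> Lmean x y <= (x + y) / 2.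
Proof.
intros Hx Hy. destruct (Req_dec x y) as [E|E].
- subst. unfold Lmean. destruct (Req_EM_T y y); lra.
- rewrite Lmean_ne; auto. pose proof (ln_neq x y Hx Hy E).
  pose proof (KL (ln x) (ln y) H). rewrite !exp_ln in H0; auto.
Qed.

Lemma Lspread_pos (c d1 d2 : R) : 0 < d1 <= d2 -> d2 < c ->
  Lmean (c + d2) (c - d2) <= Lmean (c + d1) (c - d1).
Proof.
intros Hd Hc.
assert (Hform : forall d, 0 < d < c ->
   Lmean (c + d) (c - d) = 2 * d / (ln (1 + d / c) - ln (1 - d / c)) /\
   0 < ln (1 + d / c) - ln (1 - d / c)).
{ intros d Hd'. 
  assert (0 < d / c < 1).
  { split. apply Rdiv_lt_0_compat; lra. apply Rmult_lt_reg_r with c; [lra|].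
    unfold Rdiv. rewrite Rmult_assoc, Rinv_l; lra. }
  assert (E1 : c + d = c * (1 + d / c)) by (field; lra).
  assert (E2 : c - d = c * (1 - d / c)) by (field; lra).
  split.
  - rewrite Lmean_ne by lra. rewrite E1 at 2. rewrite E2 at 2.
    rewrite !ln_mult by lra. replace (c + d - (c - d)) with (2 * d) by ring.
    f_equal. ring.
  - assert (ln (1 - d / c) < ln (1 + d / c)) by (apply ln_increasing; lra). lra. }
destruct (Hform d1 ltac:(lra)) as [E1 P1].
destruct (Hform d2 ltac:(lra)) as [E2 P2].
rewrite E1, E2.
set (x2 := d2 / c) in *.
assert (Hx2 : 0 < x2 < 1).
{ unfold x2. split. apply Rdiv_lt_0_compat; lra. apply Rmult_lt_reg_r with c; [lra|].
  unfold Rdiv. rewrite Rmult_assoc, Rinv_l; lra. }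
set (l := d1 / d2).
assert (Hl : 0 < l <= 1).
{ unfold l. split. apply Rdiv_lt_0_compat; lra. apply Rmult_le_reg_r with d2; [lra|].
  unfold Rdiv. rewrite Rmult_assoc, Rinv_l; lra. }
assert (Ex : d1 / c = l * x2) by (unfold l, x2; field; lra).
rewrite Ex in *.
pose proof (Fconv l x2 ltac:(lra) ltac:(lra)).
set (F1 := ln (1 + l * x2) - ln (1 - l * x2)) in *.
set (F2 := ln (1 + x2) - ln (1 - x2)) in *.
assert (Ed1 : d1 = l * d2) by (unfold l; field; lra).
rewrite Ed1.
apply Rmult_le_reg_r with (F1 * F2). apply Rmult_lt_0_compat; lra.
replace (2 * d2 / F2 * (F1 * F2)) with (2 * d2 * F1) by (field; lra).
replace (2 * (l * d2) / F1 * (F1 * F2)) with (2 * d2 * (l * F2)) by (field; lra).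
nra.
Qed.

Lemma Lspread (c e1 e2 : R) : Rabs e1 <= Rabs e2 -> Rabs e2 < c ->
  Lmean (c + e2) (c - e2) <= Lmean (c + e1) (c - e1).
Proof.
intros H1 H2.
assert (Hsym : forall e, Rabs e < c -> Lmean (c + e) (c - e) = Lmean (c + Rabs e) (c - Rabs e)).
{ intros e He. unfold Rabs in *. destruct (Rcase_abs e).
  - rewrite Lmean_sym by lra. f_equal; ring.
  - reflexivity. }
rewrite (Hsym e1) by lra. rewrite (Hsym e2) by lra.
pose proof (Rabs_pos e1).
destruct (Req_dec (Rabs e1) 0) as [Z|Z].
- rewrite Z. replace (c + 0) with c by ring. replace (c - 0) with c by ring.
  unfold Lmean at 2. destruct (Req_EM_T c c); [|lra].
  pose proof (LA (c + Rabs e2) (c - Rabs e2) ltac:(lra) ltac:(lra)). lra.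
- apply Lspread_pos; lra.
Qed.


Lemma core_up (al be v : R) : al <> be -> 0 < v < 1 ->
  let a := exp al in let b := exp be in
  let Gv := exp ((1 - v) * al + v * be) in
  let G1 := exp (v * al + (1 - v) * be) in
  (1 / (al - be) * ((1 - v) / v * (a - Gv) + v / (1 - v) * (Gv - b)) +
   1 / (al - be) * (v / (1 - v) * (a - G1) + (1 - v) / v * (G1 - b))) / 2
  <= (a + b) / 2.
Proof.
intros Hab Hv a b Gv G1.
set (g1 := (1 - v) * al + v * be). set (g2 := v * al + (1 - v) * be).
assert (Hd : al - be <> 0) by lra.
assert (N1 : al <> g1). { unfold g1. intro E. apply Hd. apply Rmult_eq_reg_l with v; [|lra]. lra. }
assert (N2 : g1 <> be). { unfold g1. intro E. apply Hd. apply Rmult_eq_reg_l with (1 - v); [|lra]. lra. }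
assert (N3 : al <> g2). { unfold g2. intro E. apply Hd. apply Rmult_eq_reg_l with (1 - v); [|lra]. lra. }
assert (N4 : g2 <> be). { unfold g2. intro E. apply Hd. apply Rmult_eq_reg_l with v; [|lra]. lra. }
pose proof (KL al g1 N1) as K1. pose proof (KL g1 be N2) as K2.
pose proof (KL al g2 N3) as K3. pose proof (KL g2 be N4) as K4.
fold a b Gv in K1, K2. fold a b G1 in K3, K4.
assert (E1 : 1 / (al - be) * ((1 - v) / v * (a - Gv) + v / (1 - v) * (Gv - b))
   = (1 - v) * ((a - Gv) / (al - g1)) + v * ((Gv - b) / (g1 - be))).
{ replace (al - g1) with (v * (al - be)) by (unfold g1; ring).
  replace (g1 - be) with ((1 - v) * (al - be)) by (unfold g1; ring).
  field. repeat split; intro; lra. }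
assert (E2 : 1 / (al - be) * (v / (1 - v) * (a - G1) + (1 - v) / v * (G1 - b))
   = v * ((a - G1) / (al - g2)) + (1 - v) * ((G1 - b) / (g2 - be))).
{ replace (al - g2) with ((1 - v) * (al - be)) by (unfold g2; ring).
  replace (g2 - be) with (v * (al - be)) by (unfold g2; ring).
  field. repeat split; intro; lra. }
rewrite E1, E2.
set (m := (al + be) / 2). set (s := (al - be) / 2).
pose proof (coshmono (1 - 2 * v) s ltac:(lra)) as C.
assert (Ea : a = exp m * exp s) by (unfold a; rewrite <- exp_plus; f_equal; unfold m, s; field).
assert (Eb : b = exp m * exp (- s)) by (unfold b; rewrite <- exp_plus; f_equal; unfold m, s; field).
assert (Eg : Gv = exp m * exp ((1 - 2 * v) * s)) by (unfold Gv; rewrite <- exp_plus; f_equal; unfold m, s; field).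
assert (Eg2 : G1 = exp m * exp (- ((1 - 2 * v) * s))) by (unfold G1; rewrite <- exp_plus; f_equal; unfold m, s; field).
assert (CC : Gv + G1 <= a + b).
{ rewrite Ea, Eb, Eg, Eg2. pose proof (exp_pos m). nra. }
assert (Hl1 : 0 <= 1 - v) by lra. assert (Hl2 : 0 <= v) by lra.
pose proof (Rmult_le_compat_l _ _ _ Hl1 K1).
pose proof (Rmult_le_compat_l _ _ _ Hl2 K2).
pose proof (Rmult_le_compat_l _ _ _ Hl2 K3).
pose proof (Rmult_le_compat_l _ _ _ Hl1 K4).
change (exp g1) with Gv in *. change (exp g2) with G1 in *. lra.
Qed.

Lemma core_low (al be v : R) : al <> be -> 0 < v < 1 ->
  let a := exp al in let b := exp be in
  let Gv := exp ((1 - v) * al + v * be) in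
  let G1 := exp (v * al + (1 - v) * be) in
  (a - b) / (al - be) <=
  (1 / (al - be) * ((1 - v) / v * (a - Gv) + v / (1 - v) * (Gv - b)) +
   1 / (al - be) * (v / (1 - v) * (a - G1) + (1 - v) / v * (G1 - b))) / 2.
Proof.
intros Hab Hv a b Gv G1.
set (m := (al + be) / 2). set (s := (al - be) / 2). set (w := 1 - 2 * v).
assert (Ea : a = exp m * exp s) by (unfold a; rewrite <- exp_plus; f_equal; unfold m, s; field).
assert (Eb : b = exp m * exp (- s)) by (unfold b; rewrite <- exp_plus; f_equal; unfold m, s; field).
assert (Eg : Gv = exp m * exp (w * s)) by (unfold Gv; rewrite <- exp_plus; f_equal; unfold m, s, w; field).
assert (Eg2 : G1 = exp m * exp (- (w * s))) by (unfold G1; rewrite <- exp_plus; f_equal; unfold m, s, w; field).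
pose proof (F1 w s ltac:(unfold w; lra)) as HF.
assert (Hs : s <> 0) by (unfold s; lra).
assert (Eab : al - be = 2 * s) by (unfold s; field).
rewrite Eab, Ea, Eb, Eg, Eg2.
set (E := exp m). set (P := exp s). set (Pi := exp (- s)). set (Q := exp (w * s)). set (Qi := exp (-(w * s))).
fold P Pi Q Qi in HF.
assert (HE : 0 < E) by apply exp_pos.
apply Rminus_le.
assert (Hw : w * w = 1 - 4 * (v * (1 - v))) by (unfold w; ring).
assert (Id : (E * P - E * Pi) / (2 * s) -
  (1 / (2 * s) * ((1 - v) / v * (E * P - E * Q) + v / (1 - v) * (E * Q - E * Pi)) +
   1 / (2 * s) * (v / (1 - v) * (E * P - E * Qi) + (1 - v) / v * (E * Qi - E * Pi))) / 2
  = - (E * (w * s * (w * (P - Pi) - (Q - Qi))) / (4 * (s * s) * (v * (1 - v))))).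
{ unfold w. field. repeat split; intro; lra. }
rewrite Id.
assert (0 <= E * (w * s * (w * (P - Pi) - (Q - Qi))) / (4 * (s * s) * (v * (1 - v)))).
{ apply Rdiv_le_0_compat. nra.
  assert (0 < s * s) by nra. assert (0 < v * (1 - v)) by nra. nra. }
lra.
Qed.


Lemma part1 (v a b : R) :
  0 <= v <= 1 -> 0 < a -> 0 < b ->
  (Lmean a b <= Amean (Lw v a b) (Lw (1 - v) a b) <= Amean a b).
Proof.
intros Hv Ha Hb.
destruct (Req_dec a b) as [Eab|Nab].
{ subst. unfold Lmean, Lw, Amean. destruct (Req_EM_T b b); [|congruence]. lra. }
pose proof (LA a b Ha Hb) as HLA.
destruct (Req_dec v 0) as [V0|V0].
{ subst. replace (1 - 0) with 1 by ring. unfold Lw, Amean in *.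
  destruct (Req_EM_T a b); [contradiction|].
  destruct (Req_EM_T 0 0); [|congruence].
  destruct (Req_EM_T 1 0); [lra|]. destruct (Req_EM_T 1 1); [|congruence]. lra. }
destruct (Req_dec v 1) as [V1|V1].
{ subst. replace (1 - 1) with 0 by ring. unfold Lw, Amean in *.
  destruct (Req_EM_T a b); [contradiction|].
  destruct (Req_EM_T 0 0); [|congruence].
  destruct (Req_EM_T 1 0); [lra|]. destruct (Req_EM_T 1 1); [|congruence]. lra. }
assert (Hv' : 0 < v < 1) by lra.
unfold Lw, Amean.
destruct (Req_EM_T a b); [contradiction|].
destruct (Req_EM_T v 0); [contradiction|].
destruct (Req_EM_T v 1); [contradiction|].
destruct (Req_EM_T (1 - v) 0); [lra|].
destruct (Req_EM_T (1 - v) 1); [lra|].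
rewrite Lmean_ne by assumption.
replace (1 - (1 - v)) with v by ring.
unfold Rpower.
rewrite <- !exp_plus.
pose proof (ln_neq a b Ha Hb Nab) as Hne.
remember (ln a) as al. remember (ln b) as be.
assert (Ea : exp al = a) by (subst; apply exp_ln; auto).
assert (Eb : exp be = b) by (subst; apply exp_ln; auto).
rewrite <- Ea, <- Eb.
pose proof (core_low al be v Hne Hv') as L1.
pose proof (core_up al be v Hne Hv') as U1.
cbv zeta in L1, U1.
split; lra.
Qed.

Lemma part2 (v a b : R) :
  0 <= v <= 1 -> 0 < a -> 0 < b ->
  (Lmean a b <= Lmean (Aw v a b) (Aw (1 - v) a b) <= Amean a b).
Proof.
intros Hv Ha Hb.
set (c := (a + b) / 2). set (D := (a - b) / 2). set (w := 1 - 2 * v).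
assert (E1 : Aw v a b = c + w * D) by (unfold Aw, c, D, w; field).
assert (E2 : Aw (1 - v) a b = c - w * D) by (unfold Aw, c, D, w; field).
assert (E3 : a = c + D) by (unfold c, D; field).
assert (E4 : b = c - D) by (unfold c, D; field).
assert (HD : Rabs D < c) by (unfold Rabs, c, D; destruct (Rcase_abs ((a - b) / 2)); lra).
assert (HwD : Rabs (w * D) <= Rabs D).
{ rewrite Rabs_mult. assert (Rabs w <= 1) by (unfold Rabs, w; destruct (Rcase_abs (1 - 2 * v)); lra).
  pose proof (Rabs_pos D). pose proof (Rabs_pos w). nra. }
rewrite E1, E2. split.
- rewrite E3 at 1. rewrite E4 at 1. apply Lspread; auto.
- assert (Rabs (w * D) < c) by lra.
  assert (0 < c + w * D /\ 0 < c - w * D) by (unfold Rabs in H; destruct (Rcase_abs (w*D)); lra).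
  pose proof (LA (c + w * D) (c - w * D) ltac:(lra) ltac:(lra)).
  unfold Amean. fold c. lra.
Qed.


Theorem theorem2p10 (v a b : R) :
  0 <= v <= 1 -> 0 < a -> 0 < b ->
  (Lmean a b <= Amean (Lw v a b) (Lw (1 - v) a b) <= Amean a b) /\
  (Lmean a b <= Lmean (Aw v a b) (Aw (1 - v) a b) <= Amean a b).
Proof.
intros Hv Ha Hb. split; [apply part1 | apply part2]; assumption.
Qed.
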